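(* Assume the standing assumptions in the context. There exists at most one bounded constrained viscosity solution $v=(v_1,v_2)$ on $[\underline{x},+\infty)$ of the system $$\rho v_j(x)=H(x,y_j,Dv_j(x))+\lambda_j\big(v_{\bar\jmath}(x)-v_j(x)\big),\qquad j=1,2,\ \bar\jmath=3-j.$$
   Context: Standing assumptions: $\rho>0$; $-\infty<r<\rho$; $0<y_1<y_2$; $\gamma>1$; $\underline{x}\le0$ with $\rho\underline{x}+y_j>0$ for $j=1,2$; $\lambda_1,\lambda_2\ge0$ constants. Utility $u(c)=\frac{c^{1-\gamma}}{1-\gamma}$; Hamiltonian $H(x,y_j,p)=\sup_{c\ge0}\{u(c)+(rx+y_j-c)p\}$, equal to $(rx+y_j)p+\frac{\gamma}{1-\gamma}p^{1-1/\gamma}$ for $p\ge0$ and $+\infty$ for $p<0$. Viscosity subsolution on $S\subseteq[\underline{x},\infty)$: u.s.c. pair $v$ such that whenever $\varphi$ smooth, $j\in\{1,2\}$, and $v_j-\varphi$ has a local max (relative to $[\underline{x},\infty)$) at $x_0\in S$, then $\rho v_j(x_0)\le H(x_0,y_j,D\varphi(x_0))+\lambda_j(v_{\bar\jmath}(x_0)-v_j(x_0))$. Viscosity supersolution on $S$: l.s.c. pair with the reverse inequality at local minima $x_0\in S$. A constrained viscosity solution is a continuous pair that is a viscosity supersolution on $(\underline{x},\infty)$ and a viscosity subsolution on $[\underline{x},\infty)$. *)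

(* Defs.v *)
From Stdlib Require Import Reals.
From Coquelicot Require Import Coquelicot.
Open Scope R_scope.

(* CRRA utility u(c) = c^(1-gamma)/(1-gamma), for c > 0.  Since gamma > 1,
   u(0) = -infinity, so c = 0 never contributes to the supremum below. *)
Definition util (gamma c : R) : R := Rpower c (1 - gamma) / (1 - gamma).

Definition Ham (r gamma x y p : R) : Rbar :=
  Lub_Rbar (fun z => exists c, 0 < c /\ z = util gamma c + (r * x + y - c) * p).

Definition smooth (phi : R -> R) : Prop :=
  forall (n : nat) (x : R), ex_derive (Derive_n phi n) x.

Definition loc_max_rel (xl : R) (f : R -> R) (x0 : R) : Prop :=
  exists d, 0 < d /\ forall x, xl <= x -> Rabs (x - x0) < d -> f x <= f x0.
Definition loc_min_rel (xl : R) (f : R -> R) (x0 : R) : Prop :=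
  exists d, 0 < d /\ forall x, xl <= x -> Rabs (x - x0) < d -> f x0 <= f x.

(* j : bool encodes the regime: true = 1, false = 2;  negb j = \bar j *)
Definition ysel (y1 y2 : R) (j : bool) : R := if j then y1 else y2.
Definition lsel (l1 l2 : R) (j : bool) : R := if j then l1 else l2.

Definition usc_on (xl : R) (f : R -> R) : Prop :=
  forall x0, xl <= x0 -> forall eps, 0 < eps ->
    exists d, 0 < d /\ forall x, xl <= x -> Rabs (x - x0) < d -> f x < f x0 + eps.
Definition lsc_on (xl : R) (f : R -> R) : Prop :=
  forall x0, xl <= x0 -> forall eps, 0 < eps ->
    exists d, 0 < d /\ forall x, xl <= x -> Rabs (x - x0) < d -> f x0 - eps < f x.

Definition visc_sub (rho r gamma y1 y2 l1 l2 xl : R) (S : R -> Prop)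
  (v : bool -> R -> R) : Prop :=
  (forall j, usc_on xl (v j)) /\
  forall (phi : R -> R) (j : bool) (x0 : R),
    smooth phi -> S x0 -> loc_max_rel xl (fun x => v j x - phi x) x0 ->
    Rbar_le (Finite (rho * v j x0))
      (Rbar_plus (Ham r gamma x0 (ysel y1 y2 j) (Derive phi x0))
                 (Finite (lsel l1 l2 j * (v (negb j) x0 - v j x0)))).

Definition visc_super (rho r gamma y1 y2 l1 l2 xl : R) (S : R -> Prop)
  (v : bool -> R -> R) : Prop :=
  (forall j, lsc_on xl (v j)) /\
  forall (phi : R -> R) (j : bool) (x0 : R),
    smooth phi -> S x0 -> loc_min_rel xl (fun x => v j x - phi x) x0 ->
    Rbar_le (Rbar_plus (Ham r gamma x0 (ysel y1 y2 j) (Derive phi x0))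
                       (Finite (lsel l1 l2 j * (v (negb j) x0 - v j x0))))
            (Finite (rho * v j x0)).

Definition cont_on (xl : R) (f : R -> R) : Prop :=
  forall x0, xl <= x0 -> forall eps, 0 < eps ->
    exists d, 0 < d /\ forall x, xl <= x -> Rabs (x - x0) < d -> Rabs (f x - f x0) < eps.

Definition constrained_visc_sol (rho r gamma y1 y2 l1 l2 xl : R)
  (v : bool -> R -> R) : Prop :=
  (forall j, cont_on xl (v j)) /\
  visc_super rho r gamma y1 y2 l1 l2 xl (fun x => xl < x) v /\
  visc_sub rho r gamma y1 y2 l1 l2 xl (fun x => xl <= x) v.

Definition bounded_on (xl : R) (v : bool -> R -> R) : Prop :=
  exists M, forall j x, xl <= x -> Rabs (v j x) <= M.

(* Main.v *)
Require Import Defs.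
From Stdlib Require Import Reals Lra Psatz Classical ClassicalEpsilon.
From Coquelicot Require Import Coquelicot.
Open Scope R_scope.

Lemma Derive_quad A B C x : Derive (fun x => A + B*x + C*(x*x)) x = B + 2*C*x.
Proof. apply is_derive_unique. auto_derive; auto. ring. Qed.

Lemma Derive_n_quad A B C n x :
  Derive_n (fun x => A + B*x + C*(x*x)) (S (S n)) x = match n with O => 2*C | _ => 0 end.
Proof.
  revert x; induction n; intro x.
  - simpl. rewrite (Derive_ext _ (fun x => B + 2*C*x)).
    + apply is_derive_unique. auto_derive; auto. ring.
    + intro t. apply Derive_quad.
  - change (Derive (Derive_n (fun x => A + B*x + C*(x*x)) (S (S n))) x = 0).
    rewrite (Derive_ext _ (fun _ => match n with O => 2*C | _ => 0 end)).
    + apply Derive_const.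
    + exact IHn.
Qed.

Lemma smooth_quad A B C : smooth (fun x => A + B*x + C*(x*x)).
Proof.
  intros n x. destruct n as [|[|n]].
  - simpl. auto_derive; auto.
  - simpl. apply (ex_derive_ext (fun x => B + 2*C*x)).
    + intro t. symmetry. apply Derive_quad.
    + auto_derive; auto.
  - apply (ex_derive_ext (fun _ => match n with O => 2*C | _ => 0 end)).
    + intro t. symmetry. apply Derive_n_quad.
    + apply ex_derive_const.
Qed.


Lemma ln_le_sub1 z : 0 < z -> ln z <= z - 1.
Proof. intro Hz. generalize (exp_ineq1_le (ln z)). rewrite exp_ln; lra. Qed.

Lemma ln_ge_1 z : 0 < z -> 1 - / z <= ln z.
Proof. intro Hz. generalize (ln_le_sub1 (/ z) (Rinv_0_lt_compat _ Hz)).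
  rewrite ln_Rinv; lra. Qed.

Lemma ham_step r g xs ys yj p q Lu Lw Ru Rw :
  q <= p ->
  Rbar_le (Finite Ru) (Rbar_plus (Ham r g xs yj p) (Finite Lu)) ->
  Rbar_le (Rbar_plus (Ham r g ys yj q) (Finite Lw)) (Finite Rw) ->
  Ru <= Rw - Lw + Lu + (r*xs + yj)*p - (r*ys+yj)*q.
Proof.
  intros Hqp Hsub Hsup.
  assert (Hel : forall c, 0 < c -> util g c + (r*ys + yj - c)*q + Lw <= Rw).
  { intros c Hc. unfold Ham in Hsup.
    destruct (Lub_Rbar_correct (fun z => exists c, 0 < c /\ z = util g c + (r * ys + yj - c) * q)) as [Hub _].
    specialize (Hub (util g c + (r*ys + yj - c)*q) (ex_intro _ c (conj Hc eq_refl))).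
    destruct (Lub_Rbar _) as [l| |]; simpl in *; try contradiction; lra. }
  set (Bd := Rw - Lw + (r*xs + yj)*p - (r*ys+yj)*q).
  assert (HH : Rbar_le (Ham r g xs yj p) (Finite Bd)).
  { unfold Ham.
    destruct (Lub_Rbar_correct (fun z => exists c, 0 < c /\ z = util g c + (r * xs + yj - c) * p)) as [_ Hl].
    apply Hl. intros z [c [Hc ->]]. simpl. specialize (Hel c Hc).
    assert (c*q <= c*p) by (apply Rmult_le_compat_l; lra).
    unfold Bd. nra. }
  destruct (Ham r g xs yj p) as [h| |]; simpl in *; try contradiction.
  unfold Bd in HH. lra.
Qed.



Definition goodP (f : R -> R -> R) (S : R) (P : R -> R -> Prop) := forall e, 0 < e -> exists x y, P x y /\ S - e < f x y.

Lemma not_goodP (f : R -> R -> R) (S : R) P : ~ goodP f S P -> exists e, 0 < e /\ forall x y, P x y -> f x y <= S - e.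
Proof.
  intro H. apply NNPP. intro H2. apply H. intros e He.
  apply NNPP. intro H3. apply H2. exists e. split; auto.
  intros x y Hp. apply Rnot_lt_le. intro Hl. apply H3. exists x, y. split; auto.
Qed.

Lemma split_good (f : R -> R -> R) (S : R) (P P1 P2 : R -> R -> Prop) :
  (forall x y, P x y -> P1 x y \/ P2 x y) -> goodP f S P -> goodP f S P1 \/ goodP f S P2.
Proof.
  intros Hc Hg. apply NNPP. intro H.
  apply not_or_and in H. destruct H as [H1 H2].
  destruct (not_goodP f S _ H1) as [e1 [He1 B1]].
  destruct (not_goodP f S _ H2) as [e2 [He2 B2]].
  destruct (Hg (Rmin e1 e2)) as [x [y [Hp Hf]]].
  { apply Rmin_pos; auto. }
  generalize (Rmin_l e1 e2) (Rmin_r e1 e2). intros.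
  destruct (Hc x y Hp) as [Hq|Hq]; [specialize (B1 x y Hq)|specialize (B2 x y Hq)]; lra.
Qed.

Definition good (f : R -> R -> R) (S : R) c1 d1 c2 d2 := goodP f S (fun x y => c1 <= x <= d1 /\ c2 <= y <= d2).

Definition step (f : R -> R -> R) (S : R) (st : (R*R)*(R*R)) : (R*R)*(R*R) :=
  let '((c1,d1),(c2,d2)) := st in
  let m1 := (c1+d1)/2 in
  let xi := if excluded_middle_informative (good f S c1 m1 c2 d2) then (c1,m1) else (m1,d1) in
  let m2 := (c2+d2)/2 in
  let yi := if excluded_middle_informative (good f S (fst xi) (snd xi) c2 m2) then (c2,m2) else (m2,d2) in
  (xi, yi).

Arguments step : simpl never.

Lemma step_spec (f : R -> R -> R) (S : R) c1 d1 c2 d2 : c1 <= d1 -> c2 <= d2 -> good f S c1 d1 c2 d2 ->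
  let '((c1',d1'),(c2',d2')) := step f S ((c1,d1),(c2,d2)) in
  c1 <= c1' /\ c1' <= d1' /\ d1' <= d1 /\ d1' - c1' = (d1 - c1)/2 /\
  c2 <= c2' /\ c2' <= d2' /\ d2' <= d2 /\ d2' - c2' = (d2 - c2)/2 /\
  good f S c1' d1' c2' d2'.
Proof.
  intros H1 H2 Hg. unfold step.
  set (m1 := (c1+d1)/2). set (m2 := (c2+d2)/2).
  assert (Gx : exists c1' d1', (if excluded_middle_informative (good f S c1 m1 c2 d2) then (c1,m1) else (m1,d1)) = (c1',d1') /\
     c1 <= c1' /\ c1' <= d1' /\ d1' <= d1 /\ d1' - c1' = (d1 - c1)/2 /\ good f S c1' d1' c2 d2).
  { destruct (excluded_middle_informative (good f S c1 m1 c2 d2)) as [G|G].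
    - exists c1, m1. unfold m1; repeat split; auto; lra.
    - exists m1, d1. split; auto. unfold m1; repeat split; try lra.
      assert (Cv : forall x y, (c1 <= x <= d1 /\ c2 <= y <= d2) -> (c1 <= x <= m1 /\ c2 <= y <= d2) \/ (m1 <= x <= d1 /\ c2 <= y <= d2)).
      { intros x y H. destruct (Rle_lt_dec x m1); [left|right]; lra. }
      destruct (split_good f S _ _ _ Cv Hg) as [G'|G']; [contradiction|exact G']. }
  destruct Gx as [c1' [d1' [E [A1 [A2 [A3 [A4 A5]]]]]]]. rewrite E. simpl.
  destruct (excluded_middle_informative (good f S c1' d1' c2 m2)) as [G|G].
  - unfold m2; repeat split; auto; lra.
  - unfold m2 in *; repeat split; try lra.
    assert (Cv : forall x y, (c1' <= x <= d1' /\ c2 <= y <= d2) -> (c1' <= x <= d1' /\ c2 <= y <= (c2+d2)/2) \/ (c1' <= x <= d1' /\ (c2+d2)/2 <= y <= d2)).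
    { intros x y H. destruct (Rle_lt_dec y ((c2+d2)/2)); [left|right]; lra. }
    destruct (split_good f S _ _ _ Cv A5) as [G'|G']; [contradiction|exact G'].
Qed.

Lemma step_spec' (f : R -> R -> R) (S : R) c1 d1 c2 d2 : c1 <= d1 -> c2 <= d2 -> good f S c1 d1 c2 d2 ->
  forall c1' d1' c2' d2', step f S ((c1,d1),(c2,d2)) = ((c1',d1'),(c2',d2')) ->
  c1 <= c1' /\ c1' <= d1' /\ d1' <= d1 /\ d1' - c1' = (d1 - c1)/2 /\
  c2 <= c2' /\ c2' <= d2' /\ d2' <= d2 /\ d2' - c2' = (d2 - c2)/2 /\
  good f S c1' d1' c2' d2'.
Proof. intros H1 H2 H3 c1' d1' c2' d2' E. generalize (step_spec f S c1 d1 c2 d2 H1 H2 H3). rewrite E. auto. Qed.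



Lemma INR_le_pow2 n : INR n <= 2 ^ n.
Proof. induction n. simpl; lra. rewrite S_INR. simpl.
  assert (1 <= 2^n) by (apply pow_R1_Rle; lra). lra. Qed.

Lemma evt2 (f : R -> R -> R) a1 b1 a2 b2 Mb :
  a1 <= b1 -> a2 <= b2 ->
  (forall x y, a1 <= x <= b1 -> a2 <= y <= b2 -> f x y <= Mb) ->
  (forall x y, a1 <= x <= b1 -> a2 <= y <= b2 -> forall e, 0 < e -> exists d, 0 < d /\
     forall x' y', a1 <= x' <= b1 -> a2 <= y' <= b2 -> Rabs (x' - x) < d -> Rabs (y' - y) < d ->
       f x' y' < f x y + e) ->
  exists xm ym, a1 <= xm <= b1 /\ a2 <= ym <= b2 /\
    forall x y, a1 <= x <= b1 -> a2 <= y <= b2 -> f x y <= f xm ym.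
Proof.
  intros Hab1 Hab2 HM Husc.
  set (E := fun z => exists x y, (a1 <= x <= b1 /\ a2 <= y <= b2) /\ z = f x y).
  destruct (completeness E) as [Sm [HSub HSl]].
  { exists Mb. intros z [x [y [[? ?] ->]]]. auto. }
  { exists (f a1 a2), a1, a2. split; auto; lra. }
  assert (Hle : forall x y, a1 <= x <= b1 -> a2 <= y <= b2 -> f x y <= Sm).
  { intros x y Hx Hy. apply HSub. exists x, y; auto. }
  assert (G0 : good f Sm a1 b1 a2 b2).
  { intros e He. apply NNPP. intro H.
    assert (HS' : is_upper_bound E (Sm - e)).
    { intros z [x [y [[Hx Hy] ->]]]. apply Rnot_lt_le. intro Hl. apply H. exists x, y. auto. }
    specialize (HSl _ HS'). lra. }
  set (sq := fix sq n := match n with O => ((a1,b1),(a2,b2)) | S k => step f Sm (sq k) end).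
  assert (E0 : sq 0%nat = ((a1,b1),(a2,b2))) by reflexivity.
  assert (E1 : forall n, sq (S n) = step f Sm (sq n)) by reflexivity.
  clearbody sq.
  set (X1 := fun n => fst (fst (sq n))). set (Y1 := fun n => snd (fst (sq n))).
  set (X2 := fun n => fst (snd (sq n))). set (Y2 := fun n => snd (snd (sq n))).
  assert (Inv : forall n, a1 <= X1 n /\ X1 n <= Y1 n /\ Y1 n <= b1 /\ Y1 n - X1 n = (b1 - a1)/2^n /\
     a2 <= X2 n /\ X2 n <= Y2 n /\ Y2 n <= b2 /\ Y2 n - X2 n = (b2 - a2)/2^n /\
     good f Sm (X1 n) (Y1 n) (X2 n) (Y2 n) /\
     X1 n <= X1 (S n) /\ Y1 (S n) <= Y1 n /\ X2 n <= X2 (S n) /\ Y2 (S n) <= Y2 n).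
  { assert (Inv0 : forall n, a1 <= X1 n /\ X1 n <= Y1 n /\ Y1 n <= b1 /\ Y1 n - X1 n = (b1 - a1)/2^n /\
     a2 <= X2 n /\ X2 n <= Y2 n /\ Y2 n <= b2 /\ Y2 n - X2 n = (b2 - a2)/2^n /\
     good f Sm (X1 n) (Y1 n) (X2 n) (Y2 n)).
    { induction n.
      - unfold X1, Y1, X2, Y2. rewrite E0. cbn [fst snd]. repeat split; try lra; auto.
      - destruct IHn as [I1 [I2 [I3 [I4 [I5 [I6 [I7 [I8 I9]]]]]]]].
        unfold X1, Y1, X2, Y2 in *. rewrite E1.
        destruct (sq n) as [[c1 d1] [c2 d2]]. cbn [fst snd] in *.
        destruct (step f Sm (c1, d1, (c2, d2))) as [[c1' d1'] [c2' d2']] eqn:Es. cbn [fst snd].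
        destruct (step_spec' f Sm _ _ _ _ I2 I6 I9 _ _ _ _ Es) as [J1 [J2 [J3 [J4 [J5 [J6 [J7 [J8 J9]]]]]]]].
        repeat split; try lra; auto.
        + rewrite J4, I4. simpl. field. apply pow_nonzero; lra.
        + rewrite J8, I8. simpl. field. apply pow_nonzero; lra. }
    intro n. destruct (Inv0 n) as [I1 [I2 [I3 [I4 [I5 [I6 [I7 [I8 I9]]]]]]]].
    repeat split; auto.
    all: unfold X1, Y1, X2, Y2 in *; rewrite E1.
    all: destruct (sq n) as [[c1 d1] [c2 d2]]; cbn [fst snd] in *.
    all: destruct (step f Sm (c1, d1, (c2, d2))) as [[c1' d1'] [c2' d2']] eqn:Es; cbn [fst snd].
    all: destruct (step_spec' f Sm _ _ _ _ I2 I6 I9 _ _ _ _ Es) as [J1 [J2 [J3 [J4 [J5 [J6 [J7 [J8 J9]]]]]]]]; lra. }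
  assert (Mono : forall k n, X1 n <= X1 (n + k)%nat /\ Y1 (n+k)%nat <= Y1 n /\
                             X2 n <= X2 (n + k)%nat /\ Y2 (n+k)%nat <= Y2 n).
  { induction k; intro n.
    - rewrite Nat.add_0_r. lra.
    - rewrite Nat.add_succ_r. destruct (IHk n). destruct (Inv (n+k)%nat) as [_ [_ [_ [_ [_ [_ [_ [_ [_ ?]]]]]]]]].
      lra. }
  assert (Cross : forall n m, X1 n <= Y1 m /\ X2 n <= Y2 m).
  { intros n m. destruct (Mono m n) as [A [B [C D]]]. destruct (Mono n m) as [A' [B' [C' D']]].
    rewrite Nat.add_comm in A, B, C, D.
    destruct (Inv (m+n)%nat) as [_ [I2 [_ [_ [_ [I6 _]]]]]]. lra. }
  destruct (completeness (fun z => exists n, z = X1 n)) as [xm [Hx1 Hx2]].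
  { exists b1. intros z [n ->]. destruct (Inv n) as [? [? [? _]]]. lra. }
  { exists (X1 O). eauto. }
  destruct (completeness (fun z => exists n, z = X2 n)) as [ym [Hy1 Hy2]].
  { exists b2. intros z [n ->]. destruct (Inv n) as [_ [_ [_ [_ [? [? [? _]]]]]]]. lra. }
  { exists (X2 O). eauto. }
  assert (Bx : forall n, X1 n <= xm <= Y1 n).
  { intro n. split. apply Hx1. eauto. apply Hx2. intros z [k ->]. apply Cross. }
  assert (By : forall n, X2 n <= ym <= Y2 n).
  { intro n. split. apply Hy1. eauto. apply Hy2. intros z [k ->]. apply Cross. }
  assert (Rx : a1 <= xm <= b1).
  { destruct (Bx O). destruct (Inv O) as [? [? [? _]]]. lra. }
  assert (Ry : a2 <= ym <= b2).
  { destruct (By O). destruct (Inv O) as [_ [_ [_ [_ [? [? [? _]]]]]]]. lra. }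
  exists xm, ym. split; auto. split; auto.
  assert (Key : forall e, 0 < e -> Sm < f xm ym + 2*e).
  { intros e He. destruct (Husc xm ym Rx Ry e He) as [d [Hd Hud]].
    destruct (INR_unbounded ((b1 - a1 + (b2 - a2) + 1)/d)) as [n Hn].
    generalize (INR_le_pow2 n). intro Hp.
    assert (Hp0 : 0 < 2 ^ n) by (apply pow_lt; lra).
    assert (Hlen : b1 - a1 + (b2 - a2) + 1 < d * 2^n).
    { apply Rle_lt_trans with (((b1 - a1 + (b2 - a2) + 1)/d) * d).
      - right. field. lra.
      - rewrite Rmult_comm. apply Rmult_lt_compat_l; lra. }
    destruct (Inv n) as [I1 [I2 [I3 [I4 [I5 [I6 [I7 [I8 [I9 _]]]]]]]]].
    assert (L1 : (b1 - a1)/2^n < d).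
    { apply Rmult_lt_reg_r with (2^n); auto. unfold Rdiv. rewrite Rmult_assoc, Rinv_l; lra. }
    assert (L2 : (b2 - a2)/2^n < d).
    { apply Rmult_lt_reg_r with (2^n); auto. unfold Rdiv. rewrite Rmult_assoc, Rinv_l; lra. }
    destruct (I9 e He) as [x [y [[Hx Hy] Hf]]].
    destruct (Bx n). destruct (By n).
    assert (f x y < f xm ym + e).
    { apply Hud; try lra; apply Rabs_def1; lra. }
    lra. }
  intros x y Hx Hy. specialize (Hle x y Hx Hy).
  destruct (Rle_lt_dec Sm (f xm ym)). lra.
  specialize (Key ((Sm - f xm ym)/4)). lra.
Qed.


Definition Psi (u w : bool -> R -> R) a eps del bet j x t :=
  u j x - w j (x+t) + eps*ln t - t/del - bet*(2*(x-a)+t).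

Lemma ln_lip t t' : 0 < t -> t/2 <= t' -> Rabs (ln t' - ln t) <= 2 * Rabs (t' - t) / t.
Proof.
  intros Ht Ht'.
  assert (Ht'0 : 0 < t') by lra.
  assert (H1 : ln t' - ln t <= (t' - t)/t).
  { rewrite <- ln_div by lra. assert (Hq : 0 < t'/t) by (apply Rdiv_lt_0_compat; lra). generalize (ln_le_sub1 (t'/t) Hq).
    intro H. replace ((t'-t)/t) with (t'/t - 1) by (field; lra). exact H. }
  assert (H2 : ln t - ln t' <= (t - t')/t').
  { rewrite <- ln_div by lra. assert (Hq : 0 < t/t') by (apply Rdiv_lt_0_compat; lra). generalize (ln_le_sub1 (t/t') Hq).
    intro H. replace ((t-t')/t') with (t/t' - 1) by (field; lra). exact H. }
  assert (H3 : Rabs (t' - t)/t <= 2 * Rabs (t' - t)/t).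
  { unfold Rdiv. generalize (Rabs_pos (t'-t)). intro. generalize (Rinv_0_lt_compat t Ht). intro. nra. }
  assert (H4 : (t - t')/t' <= 2 * Rabs (t' - t) / t).
  { destruct (Rle_dec t t').
    - assert ((t - t')/t' <= 0). { unfold Rdiv. apply Rmult_le_0_r. lra. left; apply Rinv_0_lt_compat; lra. }
      assert (0 <= 2 * Rabs (t' - t)/t). { unfold Rdiv. apply Rmult_le_pos. generalize (Rabs_pos (t'-t)); lra. left; apply Rinv_0_lt_compat; lra. }
      lra.
    - rewrite Rabs_left by lra.
      apply Rmult_le_reg_r with (t*t'). nra.
      replace ((t - t')/t' * (t*t')) with ((t-t')*t) by (field; lra).
      replace (2 * - (t' - t)/t * (t*t')) with (2*(t-t')*t') by (field; lra).
      nra. }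
  assert (H5 : (t' - t)/t <= Rabs (t' - t)/t).
  { unfold Rdiv. apply Rmult_le_compat_r. left; apply Rinv_0_lt_compat; lra. apply Rle_abs. }
  apply Rabs_le. lra.
Qed.

Lemma ln_quad_lower t0 t : 0 < t0 -> t0/2 < t ->
  (t - t0)/t0 - 2*((t-t0)*(t-t0))/(t0*t0) <= ln t - ln t0.
Proof.
  intros H0 H.
  rewrite <- ln_div by lra.
  assert (Hq : 0 < t/t0) by (apply Rdiv_lt_0_compat; lra).
  generalize (ln_ge_1 (t/t0) Hq). intro Hl.
  assert (E : 1 - / (t/t0) - ((t - t0)/t0 - 2*((t-t0)*(t-t0))/(t0*t0)) = (t-t0)*(t-t0)*(2*t - t0)/(t*(t0*t0))).
  { field. lra. }
  assert (0 <= (t-t0)*(t-t0)*(2*t - t0)/(t*(t0*t0))).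
  { assert (0 <= (t-t0)*(t-t0)) by apply Rle_0_sqr. assert (0 < t*(t0*t0)) by (apply Rmult_lt_0_compat; nra).
    unfold Rdiv. apply Rmult_le_pos. apply Rmult_le_pos; lra. left. apply Rinv_0_lt_compat. lra. }
  lra.
Qed.


Lemma mul_abs_bound c z d : 0 <= c -> Rabs z < d -> c * z <= c * d.
Proof. intros Hc Hz. apply Rmult_le_compat_l; auto. generalize (Rle_abs z); lra. Qed.

Lemma Psi_usc u w a eps del bet j x t Rx eta T :
  0 < eps -> 0 < del -> 0 < bet -> 0 < eta ->
  (forall j, cont_on a (u j)) -> (forall j, cont_on a (w j)) ->
  a <= x <= Rx -> eta <= t <= T -> forall e, 0 < e -> exists d, 0 < d /\
     forall x' t', a <= x' <= Rx -> eta <= t' <= T -> Rabs (x' - x) < d -> Rabs (t' - t) < d ->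
       Psi u w a eps del bet j x' t' < Psi u w a eps del bet j x t + e.
Proof.
  intros He Hd Hb Heta Hcu Hcw Hx Ht e Hee.
  destruct (Hcu j x ltac:(lra) (e/4) ltac:(lra)) as [d1 [Hd1 Hu1]].
  destruct (Hcw j (x+t) ltac:(lra) (e/4) ltac:(lra)) as [d2 [Hd2 Hw2]].
  set (L := 2*eps/t + /del + 3*bet).
  assert (HL : 0 < L).
  { unfold L. assert (0 < 2*eps/t) by (apply Rdiv_lt_0_compat; lra).
    assert (0 < /del) by (apply Rinv_0_lt_compat; lra). lra. }
  set (d := Rmin (Rmin d1 (d2/2)) (Rmin (t/2) (e/(4*L)))).
  assert (Hdpos : 0 < d).
  { unfold d. repeat apply Rmin_pos; try lra. apply Rdiv_lt_0_compat; lra. }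
  exists d. split; auto.
  intros x' t' Hx' Ht' Hdx Hdt.
  assert (Hd_1 : d <= d1) by (unfold d; eapply Rle_trans; [apply Rmin_l|apply Rmin_l]).
  assert (Hd_2 : d <= d2/2) by (unfold d; eapply Rle_trans; [apply Rmin_l|apply Rmin_r]).
  assert (Hd_3 : d <= t/2) by (unfold d; eapply Rle_trans; [apply Rmin_r|apply Rmin_l]).
  assert (Hd_4 : d <= e/(4*L)) by (unfold d; eapply Rle_trans; [apply Rmin_r|apply Rmin_r]).
  assert (A1 : Rabs (u j x' - u j x) < e/4) by (apply Hu1; lra).
  assert (A2 : Rabs (w j (x'+t') - w j (x+t)) < e/4).
  { apply Hw2. lra. replace (x' + t' - (x + t)) with ((x'-x) + (t'-t)) by ring.
    eapply Rle_lt_trans. apply Rabs_triang. lra. }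
  assert (Ht2 : t/2 <= t').
  { generalize (Rabs_def2 _ _ Hdt). lra. }
  assert (A3 : Rabs (ln t' - ln t) <= 2 * Rabs (t' - t)/t) by (apply ln_lip; lra).
  assert (A4 : eps * (ln t' - ln t) <= (2*eps/t) * d).
  { apply Rle_trans with (eps * (2 * Rabs (t' - t)/t)).
    apply Rmult_le_compat_l. lra. generalize (Rle_abs (ln t' - ln t)). lra.
    replace (eps * (2 * Rabs (t' - t) / t)) with ((2*eps/t) * Rabs (t'-t)) by (field; lra).
    apply Rmult_le_compat_l. left. apply Rdiv_lt_0_compat; lra. lra. }
  assert (A5 : /del * (t - t') <= /del * d).
  { apply mul_abs_bound. left; apply Rinv_0_lt_compat; lra.
    rewrite Rabs_minus_sym. auto. }
  assert (A6 : bet * (x - x') <= bet * d).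
  { apply mul_abs_bound. lra. rewrite Rabs_minus_sym. auto. }
  assert (A7 : bet * (t - t') <= bet * d).
  { apply mul_abs_bound. lra. rewrite Rabs_minus_sym. auto. }
  assert (A8 : L * d <= e/4).
  { apply Rle_trans with (L * (e/(4*L))). apply Rmult_le_compat_l; lra.
    right. field. lra. }
  generalize (Rabs_def2 _ _ A1) (Rabs_def2 _ _ A2). intros [B1 B2] [B3 B4].
  unfold Psi. unfold L in A8. unfold Rdiv in *.
  assert (E1 : (2 * eps * / t + / del + 3 * bet) * d = 2*eps*/t*d + /del*d + 3*(bet*d)) by ring.
  assert (E2 : /del * (t - t') = t * /del - t' * /del) by ring.
  rewrite E1 in A8. rewrite E2 in A5.
  assert (E3 : bet * (2 * (x' - a) + t') - bet * (2 * (x - a) + t) = - 2*(bet*(x-x')) - bet*(t-t')) by ring.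
  lra.
Qed.


Lemma glob_max u w a eps del bet Mu Mw (j0 : bool) x0 tau :
  0 < eps -> 0 < del -> 0 < bet -> eps <= /(2*del) -> a <= x0 -> 0 < tau ->
  (forall j x, a <= x -> Rabs (u j x) <= Mu) -> (forall j x, a <= x -> Rabs (w j x) <= Mw) ->
  (forall j, cont_on a (u j)) -> (forall j, cont_on a (w j)) ->
  exists jb xb tb, a <= xb /\ 0 < tb /\ forall j x t, a <= x -> 0 < t ->
    Psi u w a eps del bet j x t <= Psi u w a eps del bet jb xb tb.
Proof.
  intros He Hd Hb Hed Hx0 Htau HMu HMw Hcu Hcw.
  set (Kb := Mu + Mw).
  assert (HK : forall j x t, a <= x -> 0 < t -> u j x - w j (x+t) <= Kb).
  { intros j x t Hx Ht. generalize (HMu j x Hx) (HMw j (x+t) ltac:(lra)). intros H1 H2.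
    generalize (Rle_abs (u j x)) (Rle_abs (- w j (x+t))). rewrite Rabs_Ropp. unfold Kb. lra. }
  assert (Hid : 0 < /del) by (apply Rinv_0_lt_compat; lra).
  assert (Hed' : eps * (2*del) <= 1).
  { apply Rle_trans with (/(2*del) * (2*del)). apply Rmult_le_compat_r; lra. right. field. lra. }
  assert (U1 : forall j x t, a <= x -> 0 < t -> Psi u w a eps del bet j x t <= Kb + eps * ln t).
  { intros j x t Hx Ht. unfold Psi. generalize (HK j x t Hx Ht). intro.
    assert (0 <= t/del) by (apply Rdiv_le_0_compat; lra).
    assert (0 <= bet*(2*(x-a)+t)) by (apply Rmult_le_pos; lra). lra. }
  assert (U2 : forall j x t, a <= x -> 0 < t -> Psi u w a eps del bet j x t <= Kb - t/(2*del) - 2*bet*(x-a)).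
  { intros j x t Hx Ht. unfold Psi. generalize (HK j x t Hx Ht). intro.
    assert (eps * ln t <= eps * t).
    { apply Rmult_le_compat_l. lra. generalize (ln_le_sub1 t Ht). lra. }
    assert (eps * t * (2*del) <= t) by nra.
    assert (eps * t <= t/(2*del)).
    { apply Rmult_le_reg_r with (2*del). lra. replace (t/(2*del)*(2*del)) with t by (field; lra). lra. }
    assert (t/del = t/(2*del) + t/(2*del)) by (field; lra).
    assert (0 <= bet * t) by nra.
    assert (bet*(2*(x-a)+t) = 2*bet*(x-a) + bet*t) by ring.
    lra. }
  set (Ref := Psi u w a eps del bet j0 x0 tau).
  set (C := Rabs Kb + Rabs Ref + 1).
  assert (HC : Kb - C < Ref).
  { unfold C. generalize (Rle_abs Kb) (Rle_abs (-Ref)). rewrite Rabs_Ropp. lra. }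
  assert (HC0 : 0 < C) by (unfold C; generalize (Rabs_pos Kb) (Rabs_pos Ref); lra).
  set (Rx := a + C/(2*bet)). set (T := 2*del*C). set (eta := exp (- C / eps)).
  assert (Heta : 0 < eta) by apply exp_pos.
  assert (Out : forall j x t, a <= x -> 0 < t -> (Rx < x \/ T < t \/ t < eta) ->
     Psi u w a eps del bet j x t < Ref).
  { intros j x t Hx Ht [H|[H|H]].
    - generalize (U2 j x t Hx Ht). intro HU.
      assert (C < 2*bet*(x-a)).
      { unfold Rx in H. apply Rle_lt_trans with (2*bet*(C/(2*bet))).
        right; field; lra. apply Rmult_lt_compat_l; lra. }
      assert (0 <= t/(2*del)) by (apply Rdiv_le_0_compat; lra). lra.
    - generalize (U2 j x t Hx Ht). intro HU.
      assert (C < t/(2*del)).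
      { unfold T in H. apply Rmult_lt_reg_r with (2*del). lra.
        replace (t/(2*del)*(2*del)) with t by (field; lra). lra. }
      assert (0 <= 2*bet*(x-a)) by nra. lra.
    - generalize (U1 j x t Hx Ht). intro HU.
      assert (ln t < - C/eps). { unfold eta in H. rewrite <- (ln_exp (-C/eps)). apply ln_increasing; auto. }
      assert (eps * ln t < eps * (-C/eps)) by (apply Rmult_lt_compat_l; lra).
      replace (eps * (-C/eps)) with (-C) in * by (field; lra). lra. }
  assert (In0 : x0 <= Rx /\ eta <= tau <= T).
  { destruct (Rle_dec x0 Rx); destruct (Rle_dec eta tau); destruct (Rle_dec tau T); try (repeat split; auto; fail);
    exfalso; assert (Psi u w a eps del bet j0 x0 tau < Ref) by (apply Out; auto; lra); unfold Ref in *; lra. }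
  assert (HaRx : a <= Rx).
  { unfold Rx. assert (0 < C/(2*bet)) by (apply Rdiv_lt_0_compat; lra). lra. }
  assert (Hmax : forall j, exists xm tm, a <= xm <= Rx /\ eta <= tm <= T /\
     forall x t, a <= x <= Rx -> eta <= t <= T -> Psi u w a eps del bet j x t <= Psi u w a eps del bet j xm tm).
  { intro j. apply (evt2 (Psi u w a eps del bet j) a Rx eta T Kb HaRx ltac:(lra)).
    - intros x t Hx Ht. generalize (U2 j x t ltac:(lra) ltac:(lra)).
      assert (0 <= t/(2*del)) by (apply Rdiv_le_0_compat; lra). assert (0 <= 2*bet*(x-a)) by nra. lra.
    - intros x t Hx Ht e Hee. apply Psi_usc with (Rx := Rx) (T := T); auto. }
  destruct (Hmax true) as [xT [tT [HxT [HtT MT]]]].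
  destruct (Hmax false) as [xF [tF [HxF [HtF MF]]]].
  set (PT := Psi u w a eps del bet true xT tT). set (PF := Psi u w a eps del bet false xF tF).
  assert (Gl : forall j x t, a <= x -> 0 < t -> Psi u w a eps del bet j x t <= Rmax PT PF).
  { assert (HR : Ref <= Rmax PT PF).
    { generalize (Rmax_l PT PF) (Rmax_r PT PF). intros. unfold Ref.
      destruct j0; [generalize (MT x0 tau ltac:(lra) ltac:(lra))|generalize (MF x0 tau ltac:(lra) ltac:(lra))];
      fold PT PF; lra. }
    intros j x t Hx Ht.
    destruct (Rle_dec x Rx); destruct (Rle_dec eta t); destruct (Rle_dec t T);
    try (assert (Psi u w a eps del bet j x t < Ref) by (apply Out; auto; lra); lra).
    generalize (Rmax_l PT PF) (Rmax_r PT PF). intros.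
    destruct j; [generalize (MT x t ltac:(lra) ltac:(lra))|generalize (MF x t ltac:(lra) ltac:(lra))];
    fold PT PF; lra. }
  destruct (Rle_dec PF PT).
  - exists true, xT, tT. split; [lra|split;[lra|]]. intros j x t Hx Ht.
    generalize (Gl j x t Hx Ht). rewrite Rmax_left by lra. auto.
  - exists false, xF, tF. split; [lra|split;[lra|]]. intros j x t Hx Ht.
    generalize (Gl j x t Hx Ht). rewrite Rmax_right by lra. auto.
Qed.


Lemma core rho r y1 y2 gamma a l1 l2 (u w : bool -> R -> R) eps del bet (jb : bool) xb tb :
  0 < eps -> 0 < del -> 0 < bet -> a <= xb -> 0 < tb -> 0 <= l1 -> 0 <= l2 ->
  visc_sub rho r gamma y1 y2 l1 l2 a (fun x => a <= x) u ->
  visc_super rho r gamma y1 y2 l1 l2 a (fun x => a < x) w ->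
  (forall j x t, a <= x -> 0 < t -> Psi u w a eps del bet j x t <= Psi u w a eps del bet jb xb tb) ->
  rho * (u jb xb - w jb (xb+tb)) <=
    (r*xb + ysel y1 y2 jb)*(eps/tb - /del + bet) - (r*(xb+tb) + ysel y1 y2 jb)*(eps/tb - /del - bet).
Proof.
  intros He Hd Hb Hxb Htb Hl1 Hl2 [_ Hsub] [_ Hsup] Hmax.
  set (yb := xb + tb).
  set (K := 2*eps/(tb*tb)).
  set (p := eps/tb - /del + bet). set (q := eps/tb - /del - bet).
  assert (HK : 0 <= K) by (unfold K; apply Rdiv_le_0_compat; nra).
  set (P1 := fun x => K*xb*xb + (p - 2*K*xb)*x + K*(x*x)).
  set (P2 := fun y => -K*yb*yb + (q + 2*K*yb)*y + (-K)*(y*y)).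
  assert (D1 : Derive P1 xb = p) by (unfold P1; rewrite Derive_quad; ring).
  assert (D2 : Derive P2 yb = q) by (unfold P2; rewrite Derive_quad; ring).
  assert (LM : loc_max_rel a (fun x => u jb x - P1 x) xb).
  { exists (tb/2). split. lra. intros x Hx Hd1.
    generalize (Rabs_def2 _ _ Hd1). intros [Ha Hb'].
    generalize (Hmax jb x (yb - x) Hx ltac:(unfold yb; lra)). unfold Psi.
    replace (x + (yb - x)) with (xb + tb) by (unfold yb; ring).
    intro H.
    generalize (ln_quad_lower tb (yb - x) Htb ltac:(unfold yb; lra)). intro HL.
    assert (HL2 : eps * ((yb - x - tb)/tb - 2*((yb-x-tb)*(yb-x-tb))/(tb*tb)) <= eps * (ln (yb - x) - ln tb))
      by (apply Rmult_le_compat_l; lra).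
    assert (E : eps * ((yb - x - tb)/tb - 2*((yb-x-tb)*(yb-x-tb))/(tb*tb)) = - (eps/tb)*(x - xb) - K*((x-xb)*(x-xb))).
    { unfold yb, K. field. lra. }
    rewrite E in HL2.
    assert (E2 : P1 x - P1 xb = p*(x-xb) + K*((x-xb)*(x-xb))) by (unfold P1; ring).
    assert (E3 : (yb - x)/del - tb/del = - (/del)*(x - xb)) by (unfold yb; field; lra).
    assert (E4 : bet * (2 * (x - a) + (yb - x)) - bet * (2 * (xb - a) + tb) = bet*(x-xb)) by (unfold yb; ring).
    assert (E5 : p*(x-xb) = eps/tb*(x-xb) - /del*(x-xb) + bet*(x-xb)) by (unfold p; ring).
    lra. }
  assert (LMn : loc_min_rel a (fun y => w jb y - P2 y) yb).
  { exists (tb/2). split. lra. intros y Hy Hd1.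
    generalize (Rabs_def2 _ _ Hd1). intros [Ha Hb'].
    generalize (Hmax jb xb (y - xb) Hxb ltac:(unfold yb in *; lra)). unfold Psi.
    replace (xb + (y - xb)) with y by ring.
    intro H.
    generalize (ln_quad_lower tb (y - xb) Htb ltac:(unfold yb in *; lra)). intro HL.
    assert (HL2 : eps * ((y - xb - tb)/tb - 2*((y-xb-tb)*(y-xb-tb))/(tb*tb)) <= eps * (ln (y - xb) - ln tb))
      by (apply Rmult_le_compat_l; lra).
    assert (E : eps * ((y - xb - tb)/tb - 2*((y-xb-tb)*(y-xb-tb))/(tb*tb)) = (eps/tb)*(y - yb) - K*((y-yb)*(y-yb))).
    { unfold yb, K. field. lra. }
    rewrite E in HL2.
    assert (E2 : P2 y - P2 yb = q*(y-yb) - K*((y-yb)*(y-yb))) by (unfold P2; ring).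
    assert (E3 : (y - xb)/del - tb/del = (/del)*(y - yb)) by (unfold yb; field; lra).
    assert (E4 : bet * (2 * (xb - a) + (y - xb)) - bet * (2 * (xb - a) + tb) = bet*(y-yb)) by (unfold yb; ring).
    assert (E5 : q*(y-yb) = eps/tb*(y-yb) - /del*(y-yb) - bet*(y-yb)) by (unfold q; ring).
    fold yb in H. lra. }
  generalize (Hsub P1 jb xb (smooth_quad _ _ _) Hxb LM). rewrite D1. intro S1.
  generalize (Hsup P2 jb yb (smooth_quad _ _ _) ltac:(unfold yb; lra) LMn). rewrite D2. intro S2.
  assert (Hqp : q <= p) by (unfold p, q; lra).
  generalize (ham_step r gamma xb yb (ysel y1 y2 jb) p q _ _ _ _ Hqp S1 S2). intro HH.
  generalize (Hmax (negb jb) xb tb Hxb Htb). unfold Psi. fold yb. intro Hn.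
  assert (Hl : 0 <= lsel l1 l2 jb) by (destruct jb; simpl; auto).
  assert (Hlam : lsel l1 l2 jb * (u (negb jb) xb - u jb xb) - lsel l1 l2 jb * (w (negb jb) yb - w jb yb) <= 0).
  { assert (u (negb jb) xb - w (negb jb) yb <= u jb xb - w jb yb) by lra.
    assert (lsel l1 l2 jb * ((u (negb jb) xb - w (negb jb) yb) - (u jb xb - w jb yb)) <= 0).
    { apply Rmult_le_0_l; lra. }
    lra. }
  fold yb. lra.
Qed.


Lemma compare rho r y1 y2 gamma a l1 l2 (u w : bool -> R -> R) :
  0 < rho -> r < rho -> y1 < y2 -> a <= 0 -> 0 < rho * a + y2 -> 0 <= l1 -> 0 <= l2 ->
  bounded_on a u -> (forall j, cont_on a (u j)) -> visc_sub rho r gamma y1 y2 l1 l2 a (fun x => a <= x) u ->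
  bounded_on a w -> (forall j, cont_on a (w j)) -> visc_super rho r gamma y1 y2 l1 l2 a (fun x => a < x) w ->
  forall j x, a <= x -> u j x <= w j x.
Proof.
  intros Hrho Hr Hy12 Ha Hay2 Hl1 Hl2 [Mu HMu] Hcu Hsub [Mw HMw] Hcw Hsup j0 x0 Hx0.
  apply Rnot_lt_le. intro Hlt.
  set (m := u j0 x0 - w j0 x0). assert (Hm : 0 < m) by (unfold m; lra).
  destruct (Hcw j0 x0 Hx0 (m/4) ltac:(lra)) as [d0 [Hd0 Hw0]].
  set (tau := d0/2). assert (Htau : 0 < tau) by (unfold tau; lra).
  assert (Hwt : w j0 (x0 + tau) < w j0 x0 + m/4).
  { assert (Rabs (w j0 (x0 + tau) - w j0 x0) < m/4).
    { apply Hw0. unfold tau; lra. replace (x0 + tau - x0) with tau by ring. rewrite Rabs_pos_eq; unfold tau; lra. }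
    generalize (Rabs_def2 _ _ H). lra. }
  set (del := 8*tau/m). assert (Hdel : 0 < del) by (unfold del; apply Rdiv_lt_0_compat; lra).
  set (Lt := Rabs (ln tau)). assert (HLt : 0 <= Lt) by apply Rabs_pos.
  set (e1 := (rho - r)/(rho*del)). set (e2 := /(2*del)). set (e3 := m/(8*(Lt+1))). set (e4 := rho*m/(8*(Rabs r + 1))).
  assert (He1 : 0 < e1) by (unfold e1; apply Rdiv_lt_0_compat; nra).
  assert (He2 : 0 < e2) by (unfold e2; apply Rinv_0_lt_compat; lra).
  assert (He3 : 0 < e3) by (unfold e3; apply Rdiv_lt_0_compat; lra).
  assert (He4 : 0 < e4) by (unfold e4; generalize (Rabs_pos r); intro; apply Rdiv_lt_0_compat; nra).
  set (eps := Rmin (Rmin e1 e2) (Rmin e3 e4)).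
  assert (Heps : 0 < eps) by (unfold eps; repeat apply Rmin_pos; auto).
  assert (Ee1 : eps <= e1) by (unfold eps; eapply Rle_trans; [apply Rmin_l|apply Rmin_l]).
  assert (Ee2 : eps <= e2) by (unfold eps; eapply Rle_trans; [apply Rmin_l|apply Rmin_r]).
  assert (Ee3 : eps <= e3) by (unfold eps; eapply Rle_trans; [apply Rmin_r|apply Rmin_l]).
  assert (Ee4 : eps <= e4) by (unfold eps; eapply Rle_trans; [apply Rmin_r|apply Rmin_r]).
  set (cab := r*a + y2).
  assert (Hcab : 0 < cab) by (unfold cab; nra).
  set (b1 := m/(8*(2*(x0-a)+tau))). set (b2 := rho*m/(16*cab)).
  assert (Hb1 : 0 < b1) by (unfold b1; apply Rdiv_lt_0_compat; lra).
  assert (Hb2 : 0 < b2) by (unfold b2; apply Rdiv_lt_0_compat; nra).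
  set (bet := Rmin b1 b2).
  assert (Hbet : 0 < bet) by (unfold bet; apply Rmin_pos; auto).
  assert (Eb1 : bet <= b1) by apply Rmin_l.
  assert (Eb2 : bet <= b2) by apply Rmin_r.
  destruct (glob_max u w a eps del bet Mu Mw j0 x0 tau Heps Hdel Hbet Ee2 Hx0 Htau HMu HMw Hcu Hcw)
    as [jb [xb [tb [Hxb [Htb Hmax]]]]].
  generalize (core rho r y1 y2 gamma a l1 l2 u w eps del bet jb xb tb Heps Hdel Hbet Hxb Htb Hl1 Hl2 Hsub Hsup Hmax).
  intro HC.
  generalize (Hmax j0 x0 tau Hx0 Htau). unfold Psi. intro HR.
  assert (F1 : eps * (8*(Lt+1)) <= m).
  { apply Rle_trans with (e3 * (8*(Lt+1))). apply Rmult_le_compat_r; lra. unfold e3. right. field. lra. }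
  assert (F2 : - (eps * Lt) <= eps * ln tau).
  { assert (- Lt <= ln tau). { unfold Lt. generalize (Rle_abs (- ln tau)). rewrite Rabs_Ropp. lra. }
    nra. }
  assert (F3 : tau/del = m/8) by (unfold del; field; lra).
  assert (F4 : bet * (2*(x0-a)+tau) <= m/8).
  { apply Rle_trans with (b1 * (2*(x0-a)+tau)). apply Rmult_le_compat_r; lra. unfold b1. right. field. lra. }
  assert (F5 : bet * (16*cab) <= rho*m).
  { apply Rle_trans with (b2 * (16*cab)). apply Rmult_le_compat_r; lra. unfold b2. right. field. lra. }
  assert (F6 : eps * (rho*del) <= rho - r).
  { apply Rle_trans with (e1 * (rho*del)). apply Rmult_le_compat_r; nra. unfold e1. right. field. nra. }
  assert (F7 : eps * (8*(Rabs r + 1)) <= rho*m).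
  { apply Rle_trans with (e4 * (8*(Rabs r+1))). apply Rmult_le_compat_r. generalize (Rabs_pos r); lra. auto.
    unfold e4. right. field. generalize (Rabs_pos r); lra. }
  set (yj := ysel y1 y2 jb).
  assert (Hyj : yj <= y2) by (unfold yj; destruct jb; simpl; lra).
  fold yj in HC.
  set (D := u jb xb - w jb (xb+tb)).
  fold D in HC.
  set (PB := D + eps * ln tb - tb/del - bet*(2*(xb-a)+tb)).
  assert (HPB : 3*m/8 <= PB).
  { unfold PB, D. assert (eps*(8*(Lt+1)) = 8*(eps*Lt) + 8*eps) by ring.
    assert (Em : m = u j0 x0 - w j0 x0) by reflexivity. lra. }
  assert (EC : (r*xb + yj)*(eps/tb - /del + bet) - (r*(xb+tb) + yj)*(eps/tb - /del - bet)
               = 2*bet*(r*xb+yj) - r*eps + r*tb/del + r*bet*tb) by (field; lra).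
  rewrite EC in HC.
  assert (G1 : rho * (eps * ln tb) <= rho * eps * tb).
  { generalize (ln_le_sub1 tb Htb). intro. assert (0 < rho*eps) by nra. nra. }
  assert (G2 : rho * eps * tb <= (rho - r) * tb / del).
  { apply Rmult_le_reg_r with del. auto.
    replace ((rho - r)*tb/del*del) with ((rho - r)*tb) by (field; lra). nra. }
  assert (G3 : bet*((r - rho)*(2*xb + tb) + 2*rho*a + 2*yj) <= 2*bet*cab).
  { unfold cab. assert ((r - rho)*(2*xb+tb) <= (r - rho)*(2*a)) by nra. nra. }
  assert (G4 : - (r*eps) <= rho*m/8).
  { generalize (Rle_abs (-r)). rewrite Rabs_Ropp. intro. nra. }
  assert (G5 : rho * PB <= rho*m/4).
  { unfold PB.
    assert (E6 : rho * (D + eps * ln tb - tb / del - bet * (2 * (xb - a) + tb)) =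
      rho*D + rho*(eps*ln tb) - rho*tb/del - rho*bet*(2*(xb-a)+tb)) by (field; lra).
    rewrite E6.
    assert (E7 : (rho - r)*tb/del = rho*tb/del - r*tb/del) by (field; lra).
    assert (E8 : bet*((r - rho)*(2*xb + tb) + 2*rho*a + 2*yj) =
       2*bet*(r*xb+yj) + r*bet*tb - rho*bet*(2*(xb-a)+tb)) by ring.
    lra. }
  nra.
Qed.

Theorem mainTheorem5 (rho r y1 y2 gamma xl l1 l2 : R)
  (Hrho : 0 < rho) (Hr : r < rho) (Hy1 : 0 < y1) (Hy12 : y1 < y2)
  (Hgamma : 1 < gamma) (Hxl : xl <= 0)
  (Hxy1 : 0 < rho * xl + y1) (Hxy2 : 0 < rho * xl + y2)
  (Hl1 : 0 <= l1) (Hl2 : 0 <= l2)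
  (v w : bool -> R -> R) :
  bounded_on xl v -> constrained_visc_sol rho r gamma y1 y2 l1 l2 xl v ->
  bounded_on xl w -> constrained_visc_sol rho r gamma y1 y2 l1 l2 xl w ->
  forall j x, xl <= x -> v j x = w j x.
Proof.
  intros Hbv [Hcv [Hsupv Hsubv]] Hbw [Hcw [Hsupw Hsubw]] j x Hx.
  apply Rle_antisym.
  - exact (compare rho r y1 y2 gamma xl l1 l2 v w Hrho Hr Hy12 Hxl Hxy2 Hl1 Hl2 Hbv Hcv Hsubv Hbw Hcw Hsupw j x Hx).
  - exact (compare rho r y1 y2 gamma xl l1 l2 w v Hrho Hr Hy12 Hxl Hxy2 Hl1 Hl2 Hbw Hcw Hsubw Hbv Hcv Hsupv j x Hx).
Qed.
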